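(* Let $A<0<B$ be integers and let $\mu\in\mathcal M_0(\mathbb Z)$ satisfy $\mu([A,B])=1$, $\mu(\{A\})>0$, $\mu(\{B\})>0$. Define $$\mathcal R_\mu=\{\mathbf r\in[0,1]^{\mathbb Z}: r_i=1\text{ for } i\notin(A,B),\ \text{and } \mathbb P(S_{\tau(\mathbf r)}=i)\le\mu(\{i\})\text{ for } i\in(A,B)\}.$$ If $\mathbf r,\mathbf r'\in\mathcal R_\mu$, then $\tilde{\mathbf r}\in\mathcal R_\mu$, where $\tilde r_i=r_i\vee r'_i$ for all $i\in\mathbb Z$.
   Context: $S=(S_t)_{t\ge0}$ is a simple symmetric random walk on $\mathbb Z$ with $S_0=0$ (discrete time). $\mathcal M_0(\mathbb Z)$ is the set of probability measures on $\mathbb Z$ with finite first moment and mean zero. For $\mathbf r=(r_x)_{x\in\mathbb Z}\in[0,1]^{\mathbb Z}$, let $\{\xi_{t,x}\}_{t\ge0,x\in\mathbb Z}$ be Bernoulli random variables, mutually independent and independent of $S$, with $\mathbb P(\xi_{t,x}=0)=r_x=1-\mathbb P(\xi_{t,x}=1)$, and $\tau(\mathbf r):=\inf\{t\ge0:\xi_{t,S_t}=0\}$ (the law of $S_{\tau(\mathbf r)}$ depends only on $\mathbf r$). *)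

(* Defs.v *)
From Stdlib Require Import Reals ZArith.
Open Scope R_scope.

Definition sum_sym (f : Z -> R) (n : nat) : R :=
  sum_f_R0 (fun k => f (Z.of_nat k - Z.of_nat n)%Z) (2 * n).

(* mu is in M_0(Z): a probability measure on Z (given by its mass function)
   with finite first moment and mean zero. *)
Definition M0 (mu : Z -> R) : Prop :=
  (forall x, 0 <= mu x) /\
  Un_cv (sum_sym mu) 1 /\
  (exists m, Un_cv (sum_sym (fun x => Rabs (IZR x) * mu x)) m) /\
  Un_cv (sum_sym (fun x => IZR x * mu x)) 0.

Definition rates (r : Z -> R) : Prop := forall x, 0 <= r x <= 1.

(* q r t y = P(S_t = y, tau(r) >= t): the walk is at y at time t and has not
   been killed at times 0..t-1.  At each time s, the walk at x is killed
   (xi_{s,x} = 0) with probability r x, independently. *)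
Fixpoint q (r : Z -> R) (t : nat) (y : Z) : R :=
  match t with
  | O => if Z.eqb y 0 then 1 else 0
  | S t' => / 2 * (q r t' (y - 1)%Z * (1 - r (y - 1)%Z))
          + / 2 * (q r t' (y + 1)%Z * (1 - r (y + 1)%Z))
  end.

(* exit_prob r i p : P(S_{tau(r)} = i) = p, i.e.
   p = sum_{t>=0} P(S_t = i, tau >= t) * r_i  (= sum_t P(tau = t, S_t = i)). *)
Definition exit_prob (r : Z -> R) (i : Z) (p : R) : Prop :=
  infinite_sum (fun t => q r t i * r i) p.

Definition R_mu (A B : Z) (mu : Z -> R) (r : Z -> R) : Prop :=
  rates r /\
  (forall i, (i <= A \/ B <= i)%Z -> r i = 1) /\
  (forall i, (A < i < B)%Z -> exists p, exit_prob r i p /\ p <= mu i).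

Definition sum_Z_interval (f : Z -> R) (A B : Z) : R :=
  sum_f_R0 (fun k => f (A + Z.of_nat k)%Z) (Z.to_nat (B - A)).

(* Main.v *)
Require Import Defs.
From Stdlib Require Import Reals ZArith Lra.
Open Scope R_scope.

Lemma q_mono (r1 r2 : Z -> R) :
  rates r1 -> rates r2 -> (forall x, r1 x <= r2 x) ->
  forall t y, 0 <= q r2 t y <= q r1 t y.
Proof.
  intros H1 H2 H12 t; induction t as [|t IH]; intros y; simpl.
  - destruct (Z.eqb y 0); lra.
  - destruct (IH (y-1)%Z) as [a b]; destruct (IH (y+1)%Z) as [c d].
    pose proof (H1 (y-1)%Z); pose proof (H2 (y-1)%Z); pose proof (H12 (y-1)%Z).
    pose proof (H1 (y+1)%Z); pose proof (H2 (y+1)%Z); pose proof (H12 (y+1)%Z).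
    split.
    + assert (0 <= q r2 t (y-1) * (1 - r2 (y-1)%Z)) by (apply Rmult_le_pos; lra).
      assert (0 <= q r2 t (y+1) * (1 - r2 (y+1)%Z)) by (apply Rmult_le_pos; lra).
      lra.
    + assert (q r2 t (y-1) * (1 - r2 (y-1)%Z) <= q r1 t (y-1) * (1 - r1 (y-1)%Z))
        by (apply Rmult_le_compat; lra).
      assert (q r2 t (y+1) * (1 - r2 (y+1)%Z) <= q r1 t (y+1) * (1 - r1 (y+1)%Z))
        by (apply Rmult_le_compat; lra).
      lra.
Qed.

Lemma exit_mono (r1 r2 : Z -> R) i p :
  rates r1 -> rates r2 -> (forall x, r1 x <= r2 x) -> r2 i = r1 i ->
  exit_prob r1 i p -> exists p', exit_prob r2 i p' /\ p' <= p.
Proof.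
  intros H1 H2 H12 Hi Hp.
  assert (Hle : forall n, 0 <= q r2 n i * r2 i <= q r1 n i * r1 i).
  { intro n; destruct (q_mono r1 r2 H1 H2 H12 n i). rewrite Hi.
    destruct (H1 i). split; [apply Rmult_le_pos|apply Rmult_le_compat_r]; lra. }
  destruct (Rseries_CV_comp _ _ Hle (exist _ p Hp)) as [p' Hp'].
  exists p'; split; [exact Hp'|].
  apply (Rle_cv_lim (Un := fun N => sum_f_R0 (fun t => q r2 t i * r2 i) N)
                    (Vn := fun N => sum_f_R0 (fun t => q r1 t i * r1 i) N)).
  - intro n; apply sum_Rle; intros; apply Hle.
  - exact Hp'.
  - exact Hp.
Qed.

Theorem lemma1 (A B : Z) (mu : Z -> R) (r r' : Z -> R) :
  (A < 0)%Z -> (0 < B)%Z ->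
  M0 mu ->
  sum_Z_interval mu A B = 1 ->
  0 < mu A -> 0 < mu B ->
  R_mu A B mu r -> R_mu A B mu r' ->
  R_mu A B mu (fun i => Rmax (r i) (r' i)).
Proof.
  intros _ _ _ _ _ _ [R1 [O1 I1]] [R2 [O2 I2]].
  assert (Rt : rates (fun i => Rmax (r i) (r' i))).
  { intro x; destruct (R1 x), (R2 x); unfold Rmax; destruct Rle_dec; lra. }
  split; [exact Rt|split].
  - intros i Hi; rewrite (O1 i Hi), (O2 i Hi); unfold Rmax; destruct Rle_dec; lra.
  - intros i Hi.
    destruct (Rle_dec (r' i) (r i)) as [Hc|Hc].
    + destruct (I1 i Hi) as [p [Hp Hm]].
      destruct (exit_mono r _ i p R1 Rt (fun x => Rmax_l _ _)) as [p' [Hp' Hl]];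
        [rewrite Rmax_left; auto | exact Hp |].
      exists p'; split; [exact Hp' | lra].
    + destruct (I2 i Hi) as [p [Hp Hm]].
      destruct (exit_mono r' _ i p R2 Rt (fun x => Rmax_r _ _)) as [p' [Hp' Hl]];
        [rewrite Rmax_right; auto; lra | exact Hp |].
      exists p'; split; [exact Hp' | lra].
Qed.
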